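(* Let $R>0$ and let $f=(f^1,f^2,f^3):\mathbb R\to\mathbb R^3$ be any circular tractrix with parameter $R$ (in any of the three cases $R>1$, $R=1$, $0<R<1$, with admissible constants $c_1,c_2$). Then $|f'(t)|=|\xi_2(t)|$ for all $t\in\mathbb R$, and for every $t$ with $\xi_2(t)\neq 0$, $$f(t)+\frac{1}{\xi_2(t)}f'(t)=\Big(R\cos\tfrac{t}{R},\,R\sin\tfrac{t}{R},\,0\Big).$$ In particular, for such $t$ the point $f(t)$ is at distance $1$ from the point $(R\cos\frac tR,R\sin\frac tR,0)$ of the circle $C$ of radius $R$ centered at the origin in the plane $x^3=0$, and the segment joining them is tangent to the curve at $f(t)$.
   Context: Coordinates $(x^1,x^2,x^3)$ on $\mathbb R^3$. Fix $R>0$. A circular tractrix with parameter $R$ is the curve $f:\mathbb R\to\mathbb R^3$, $$f(t)=\Big(\xi_1\cos\tfrac tR+\xi_2\sin\tfrac tR,\ -\xi_2\cos\tfrac tR+\xi_1\sin\tfrac tR,\ \xi_3\Big),$$ where $\xi_i=\xi_i(t)$ are given as follows. Case $R>1$: $\lambda=\frac{\sqrt{R^2-1}}{R}$, $\xi_1=\frac{(R-\frac1R)\cosh\lambda t}{\frac{c_1}{R}+\cosh\lambda t}$, $\xi_2=\frac{\lambda\sinh\lambda t}{\frac{c_1}{R}+\cosh\lambda t}$, $\xi_3=\frac{\lambda c_2}{\frac{c_1}{R}+\cosh\lambda t}$, with real constants $c_1^2+c_2^2=1$. Case $R=1$: $\xi_1=\frac{2}{c_1+t^2}$, $\xi_2=\frac{2t}{c_1+t^2}$,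 $\xi_3=\frac{c_2}{c_1+t^2}$, with real constants satisfying $4(c_1-1)=c_2^2$. Case $0<R<1$: $\lambda=\frac{\sqrt{1-R^2}}{R}$, $\xi_1=\frac{(R-\frac1R)\cos\lambda t}{\frac{c_1}{R}+\cos\lambda t}$, $\xi_2=-\frac{\lambda\sin\lambda t}{\frac{c_1}{R}+\cos\lambda t}$, $\xi_3=\frac{\lambda c_2}{\frac{c_1}{R}+\cos\lambda t}$, with real constants $c_1^2-c_2^2=1$. *)

(* Defs.v *)
From Stdlib Require Import Reals.
From Coquelicot Require Import Coquelicot.
Open Scope R_scope.

Definition admissible (r c1 c2 : R) : Prop :=
  (1 < r /\ c1 ^ 2 + c2 ^ 2 = 1) \/
  (r = 1 /\ 4 * (c1 - 1) = c2 ^ 2) \/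
  (0 < r < 1 /\ c1 ^ 2 - c2 ^ 2 = 1).

Definition lam (r : R) : R :=
  if Rlt_dec 1 r then sqrt (r ^ 2 - 1) / r else sqrt (1 - r ^ 2) / r.

Definition xi1 (r c1 c2 t : R) : R :=
  if Rlt_dec 1 r then
    (r - 1 / r) * cosh (lam r * t) / (c1 / r + cosh (lam r * t))
  else if Req_EM_T r 1 then 2 / (c1 + t ^ 2)
  else (r - 1 / r) * cos (lam r * t) / (c1 / r + cos (lam r * t)).

Definition xi2 (r c1 c2 t : R) : R :=
  if Rlt_dec 1 r then
    lam r * sinh (lam r * t) / (c1 / r + cosh (lam r * t))
  else if Req_EM_T r 1 then 2 * t / (c1 + t ^ 2)
  else - (lam r * sin (lam r * t) / (c1 / r + cos (lam r * t))).

Definition xi3 (r c1 c2 t : R) : R :=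
  if Rlt_dec 1 r then
    lam r * c2 / (c1 / r + cosh (lam r * t))
  else if Req_EM_T r 1 then c2 / (c1 + t ^ 2)
  else lam r * c2 / (c1 / r + cos (lam r * t)).

Definition tr1 (r c1 c2 t : R) : R :=
  xi1 r c1 c2 t * cos (t / r) + xi2 r c1 c2 t * sin (t / r).
Definition tr2 (r c1 c2 t : R) : R :=
  - xi2 r c1 c2 t * cos (t / r) + xi1 r c1 c2 t * sin (t / r).
Definition tr3 (r c1 c2 t : R) : R := xi3 r c1 c2 t.

(* Main.v *)
Require Import Defs.
From Stdlib Require Import Reals Lra.
From Coquelicot Require Import Coquelicot.
Open Scope R_scope.

Lemma general r (x1 x2 x3 : R -> R) t : 0 < r ->
 is_derive x1 t (x2 t * (r - x1 t) - x2 t / r) ->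
 is_derive x2 t (x1 t / r - x2 t ^ 2) ->
 is_derive x3 t (- x2 t * x3 t) ->
 (r - x1 t)^2 + x2 t^2 + x3 t^2 = 1 ->
 let f1 := fun u => x1 u * cos (u / r) + x2 u * sin (u / r) in
 let f2 := fun u => - x2 u * cos (u / r) + x1 u * sin (u / r) in
 ex_derive f1 t /\ ex_derive f2 t /\ ex_derive x3 t /\
    sqrt (Derive f1 t ^ 2 + Derive f2 t ^ 2 + Derive x3 t ^ 2) = Rabs (x2 t) /\
    (x2 t <> 0 ->
       (f1 t + / x2 t * Derive f1 t = r * cos (t / r) /\
        f2 t + / x2 t * Derive f2 t = r * sin (t / r) /\
        x3 t + / x2 t * Derive x3 t = 0) /\
       sqrt ((f1 t - r * cos (t / r)) ^ 2
             + (f2 t - r * sin (t / r)) ^ 2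
             + (x3 t - 0) ^ 2) = 1).
Proof.
intros hr h1 h2 h3 hc f1 f2.
assert (hr0 : r <> 0) by lra.
set (c := cos (t / r)). set (s := sin (t / r)).
assert (hcs : c ^ 2 + s ^ 2 = 1) by (unfold c, s; pose proof (sin2_cos2 (t/r)) as H; unfold Rsqr in H; nra).
set (X1 := x1 t) in *. set (X2 := x2 t) in *. set (X3 := x3 t) in *.
assert (H1 : is_derive f1 t (X2 * ((r - X1) * c - X2 * s))).
{ unfold f1; auto_derive.
  - repeat split; auto; eexists; eassumption.
  - replace (Derive (fun x => x1 x) t) with (X2 * (r - X1) - X2 / r)
      by (symmetry; apply is_derive_unique; apply h1).
    replace (Derive (fun x => x2 x) t) with (X1 / r - X2 ^ 2)
      by (symmetry; apply is_derive_unique; apply h2).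
    fold X1 X2. unfold c, s. change (t * / r) with (t / r). field. auto. }
assert (H2 : is_derive f2 t (X2 * ((r - X1) * s + X2 * c))).
{ unfold f2; auto_derive.
  - repeat split; auto; eexists; eassumption.
  - replace (Derive (fun x => x1 x) t) with (X2 * (r - X1) - X2 / r)
      by (symmetry; apply is_derive_unique; apply h1).
    replace (Derive (fun x => x2 x) t) with (X1 / r - X2 ^ 2)
      by (symmetry; apply is_derive_unique; apply h2).
    fold X1 X2. unfold c, s. change (t * / r) with (t / r). field. auto. }
rewrite (is_derive_unique _ _ _ H1), (is_derive_unique _ _ _ H2),
  (is_derive_unique _ _ _ h3).
split; [eexists; exact H1|]. split; [eexists; exact H2|]. split; [eexists; exact h3|].
split.
{ replace ((X2 * ((r - X1) * c - X2 * s)) ^ 2 + (X2 * ((r - X1) * s + X2 * c)) ^ 2 +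
   (- X2 * X3) ^ 2) with (Rsqr X2).
  apply sqrt_Rsqr_abs.
  unfold Rsqr.
  replace ((X2 * ((r - X1) * c - X2 * s)) ^ 2 + (X2 * ((r - X1) * s + X2 * c)) ^ 2 +
   (- X2 * X3) ^ 2) with (X2^2 * (((r-X1)^2 + X2^2) * (c^2+s^2) + X3^2)) by ring.
  rewrite hcs, Rmult_1_r, hc. ring. }
intros hX2.
unfold f1, f2. fold X1 X2 c s.
split; [split; [|split]; field; auto|].
replace ((X1 * c + X2 * s - r * c) ^ 2 + (- X2 * c + X1 * s - r * s) ^ 2 + (X3 - 0) ^ 2)
  with (((r-X1)^2 + X2^2) * (c^2+s^2) + X3^2) by ring.
rewrite hcs, Rmult_1_r, hc. exact sqrt_1.
Qed.
Lemma caseA (r c1 c2 L : R) (C S : R -> R) t : 1 < r -> L^2 = (r^2-1)/r^2 ->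
 (forall u, is_derive C u (L * S u)) -> (forall u, is_derive S u (L * C u)) ->
 C t ^2 - S t ^2 = 1 -> c1 / r + C t <> 0 -> c1^2 + c2^2 = 1 ->
 let x1 := fun u => (r - 1 / r) * C u / (c1 / r + C u) in
 let x2 := fun u => L * S u / (c1 / r + C u) in
 let x3 := fun u => L * c2 / (c1 / r + C u) in
 is_derive x1 t (x2 t * (r - x1 t) - x2 t / r) /\
 is_derive x2 t (x1 t / r - x2 t ^ 2) /\
 is_derive x3 t (- x2 t * x3 t) /\
 (r - x1 t)^2 + x2 t^2 + x3 t^2 = 1.
Proof.
intros hr hL hC hS hCS hD hc x1 x2 x3.
assert (hS2 : S t ^ 2 = C t ^2 - 1) by lra.
assert (hr0 : r <> 0) by lra.
assert (hD' : c1 + C t * r <> 0) by (intro E; apply hD; replace (c1 / r + C t) with ((c1 + C t * r)/r) by (field; auto); rewrite E; unfold Rdiv; ring).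
assert (hc2 : c2 ^ 2 = 1 - c1 ^ 2) by lra.
unfold x1, x2, x3.
split; [|split; [|split]].
- auto_derive.
  + repeat split; auto; try (eexists; apply hC; fail); try (eexists; apply hS; fail).
  + replace (Derive (fun x => C x) t) with (L * S t) by (symmetry; apply is_derive_unique; apply hC).
    field_simplify_eq; try (split; assumption); try (rewrite ?hS2, ?hc2, ?hL; field; auto).
- auto_derive.
  + repeat split; auto; try (eexists; apply hC; fail); try (eexists; apply hS; fail).
  + replace (Derive (fun x => S x) t) with (L * C t) by (symmetry; apply is_derive_unique; apply hS).
    replace (Derive (fun x => C x) t) with (L * S t) by (symmetry; apply is_derive_unique; apply hC).
    field_simplify_eq; try (split; assumption); try (rewrite ?hS2, ?hc2, ?hL; field; auto).
- auto_derive.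
  + repeat split; auto; try (eexists; apply hC; fail); try (eexists; apply hS; fail).
  + replace (Derive (fun x => C x) t) with (L * S t) by (symmetry; apply is_derive_unique; apply hC).
    field_simplify_eq; try (split; assumption); try (rewrite ?hS2, ?hc2, ?hL; field; auto).
- field_simplify_eq; try (split; assumption); try (rewrite ?hS2, ?hc2, ?hL; field; auto).
Qed.
Lemma caseC (r c1 c2 L : R) (C S : R -> R) t : 0 < r -> L^2 = (1 - r^2)/r^2 ->
 (forall u, is_derive C u (- (L * S u))) -> (forall u, is_derive S u (L * C u)) ->
 C t ^2 + S t ^2 = 1 -> c1 / r + C t <> 0 -> c1^2 - c2^2 = 1 ->
 let x1 := fun u => (r - 1 / r) * C u / (c1 / r + C u) in
 let x2 := fun u => - (L * S u / (c1 / r + C u)) in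
 let x3 := fun u => L * c2 / (c1 / r + C u) in
 is_derive x1 t (x2 t * (r - x1 t) - x2 t / r) /\
 is_derive x2 t (x1 t / r - x2 t ^ 2) /\
 is_derive x3 t (- x2 t * x3 t) /\
 (r - x1 t)^2 + x2 t^2 + x3 t^2 = 1.
Proof.
intros hr hL hC hS hCS hD hc x1 x2 x3.
assert (hS2 : S t ^ 2 = 1 - C t ^2) by lra.
assert (hr0 : r <> 0) by lra.
assert (hD' : c1 + C t * r <> 0) by (intro E; apply hD; replace (c1 / r + C t) with ((c1 + C t * r)/r) by (field; auto); rewrite E; unfold Rdiv; ring).
assert (hc2 : c2 ^ 2 = c1 ^ 2 - 1) by lra.
unfold x1, x2, x3.
split; [|split; [|split]].
- auto_derive.
  + repeat split; auto; try (eexists; apply hC; fail); try (eexists; apply hS; fail).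
  + replace (Derive (fun x => C x) t) with (- (L * S t)) by (symmetry; apply is_derive_unique; apply hC).
    field_simplify_eq; try (split; assumption); try (rewrite ?hS2, ?hc2, ?hL; field; auto).
- auto_derive.
  + repeat split; auto; try (eexists; apply hC; fail); try (eexists; apply hS; fail).
  + replace (Derive (fun x => S x) t) with (L * C t) by (symmetry; apply is_derive_unique; apply hS).
    replace (Derive (fun x => C x) t) with (- (L * S t)) by (symmetry; apply is_derive_unique; apply hC).
    field_simplify_eq; try (split; assumption); try (rewrite ?hS2, ?hc2, ?hL; field; auto).
- auto_derive.
  + repeat split; auto; try (eexists; apply hC; fail); try (eexists; apply hS; fail).
  + replace (Derive (fun x => C x) t) with (- (L * S t)) by (symmetry; apply is_derive_unique; apply hC).
    field_simplify_eq; try (split; assumption); try (rewrite ?hS2, ?hc2, ?hL; field; auto).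
- field_simplify_eq; try (split; assumption); try (rewrite ?hS2, ?hc2, ?hL; field; auto).
Qed.

Lemma caseB (c1 c2 : R) t : 4 * (c1 - 1) = c2 ^ 2 ->
 let x1 := fun u => 2 / (c1 + u ^ 2) in
 let x2 := fun u => 2 * u / (c1 + u ^ 2) in
 let x3 := fun u => c2 / (c1 + u ^ 2) in
 is_derive x1 t (x2 t * (1 - x1 t) - x2 t / 1) /\
 is_derive x2 t (x1 t / 1 - x2 t ^ 2) /\
 is_derive x3 t (- x2 t * x3 t) /\
 (1 - x1 t)^2 + x2 t^2 + x3 t^2 = 1.
Proof.
intros hc x1 x2 x3.
assert (hD : c1 + t ^ 2 <> 0) by nra.
assert (hc2 : c2 ^ 2 = 4 * (c1 - 1)) by lra.
unfold x1, x2, x3.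
split; [|split; [|split]].
- auto_derive; auto. field; auto.
- auto_derive; auto. field; auto.
- auto_derive; auto. field; auto.
- field_simplify_eq; auto. rewrite hc2. ring.
Qed.

From Stdlib Require Import FunctionalExtensionality.

Lemma d_cosh L u : is_derive (fun u => cosh (L*u)) u (L * sinh (L*u)).
Proof. unfold cosh, sinh. auto_derive; auto. field. Qed.
Lemma d_sinh L u : is_derive (fun u => sinh (L*u)) u (L * cosh (L*u)).
Proof. unfold cosh, sinh. auto_derive; auto. field. Qed.
Lemma d_cos L u : is_derive (fun u => cos (L*u)) u (- (L * sin (L*u))).
Proof. auto_derive; auto. ring. Qed.
Lemma d_sin L u : is_derive (fun u => sin (L*u)) u (L * cos (L*u)).
Proof. auto_derive; auto. ring. Qed.

Lemma exp_inv x : exp x * exp (- x) = 1.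
Proof. rewrite <- exp_plus, Rplus_opp_r. apply exp_0. Qed.

Lemma cosh_sinh x : cosh x ^ 2 - sinh x ^ 2 = 1.
Proof. unfold cosh, sinh. pose proof (exp_inv x). field_simplify. nra. Qed.

Lemma cosh_ge1 x : 1 <= cosh x.
Proof. unfold cosh. pose proof (exp_inv x). pose proof (exp_pos x). pose proof (exp_pos (-x)).
set (E := exp x) in *. set (F := exp (-x)) in *.
clearbody E F. assert (h : (E + F - 2) * (E + F + 2) >= 0) by (pose proof (pow2_ge_0 (E - F)); nra).
assert (E + F >= 2) by nra. lra. Qed.

Theorem mainTheorem1 (r c1 c2 : R) (hr : 0 < r) (hadm : admissible r c1 c2) :
  forall t : R,
    ex_derive (tr1 r c1 c2) t /\ ex_derive (tr2 r c1 c2) t /\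
    ex_derive (tr3 r c1 c2) t /\
    sqrt (Derive (tr1 r c1 c2) t ^ 2 + Derive (tr2 r c1 c2) t ^ 2
          + Derive (tr3 r c1 c2) t ^ 2) = Rabs (xi2 r c1 c2 t) /\
    (xi2 r c1 c2 t <> 0 ->
       (tr1 r c1 c2 t + / xi2 r c1 c2 t * Derive (tr1 r c1 c2) t = r * cos (t / r) /\
        tr2 r c1 c2 t + / xi2 r c1 c2 t * Derive (tr2 r c1 c2) t = r * sin (t / r) /\
        tr3 r c1 c2 t + / xi2 r c1 c2 t * Derive (tr3 r c1 c2) t = 0) /\
       sqrt ((tr1 r c1 c2 t - r * cos (t / r)) ^ 2
             + (tr2 r c1 c2 t - r * sin (t / r)) ^ 2
             + (tr3 r c1 c2 t - 0) ^ 2) = 1).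
Proof.
intro t.
destruct hadm as [[h1 hc]|[[h1 hc]|[h1 hc]]].
- assert (hL : lam r ^ 2 = (r^2-1)/r^2).
  { unfold lam; destruct (Rlt_dec 1 r); [|lra].
    replace ((sqrt (r ^ 2 - 1) / r) ^ 2) with (sqrt (r ^ 2 - 1) ^ 2 / r ^ 2) by (field; lra).
    rewrite pow2_sqrt; nra. }
  assert (E1 : xi1 r c1 c2 = fun u => (r - 1 / r) * cosh (lam r * u) / (c1 / r + cosh (lam r * u))).
  { apply functional_extensionality; intro u; unfold xi1; destruct (Rlt_dec 1 r); [reflexivity|lra]. }
  assert (E2 : xi2 r c1 c2 = fun u => lam r * sinh (lam r * u) / (c1 / r + cosh (lam r * u))).
  { apply functional_extensionality; intro u; unfold xi2; destruct (Rlt_dec 1 r); [reflexivity|lra]. }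
  assert (E3 : xi3 r c1 c2 = fun u => lam r * c2 / (c1 / r + cosh (lam r * u))).
  { apply functional_extensionality; intro u; unfold xi3; destruct (Rlt_dec 1 r); [reflexivity|lra]. }
  assert (hD : c1 / r + cosh (lam r * t) <> 0).
  { pose proof (cosh_ge1 (lam r * t)).
    assert (c1 >= -1) by nra.
    replace (c1 / r + cosh (lam r * t)) with ((c1 + cosh (lam r * t) * r) / r) by (field; lra).
    apply Rgt_not_eq. apply Rdiv_lt_0_compat; nra. }
  destruct (caseA r c1 c2 (lam r) (fun u => cosh (lam r * u)) (fun u => sinh (lam r * u)) t
     h1 hL (d_cosh (lam r)) (d_sinh (lam r)) (cosh_sinh _) hD hc) as [A1 [A2 [A3 A4]]].
  unfold tr1, tr2, tr3. rewrite E1, E2, E3.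
  exact (general r _ _ _ t hr A1 A2 A3 A4).
- subst r.
  assert (E1 : xi1 1 c1 c2 = fun u => 2 / (c1 + u ^ 2)).
  { apply functional_extensionality; intro u; unfold xi1; destruct (Rlt_dec 1 1); [lra|].
    destruct (Req_EM_T 1 1); [reflexivity|lra]. }
  assert (E2 : xi2 1 c1 c2 = fun u => 2 * u / (c1 + u ^ 2)).
  { apply functional_extensionality; intro u; unfold xi2; destruct (Rlt_dec 1 1); [lra|].
    destruct (Req_EM_T 1 1); [reflexivity|lra]. }
  assert (E3 : xi3 1 c1 c2 = fun u => c2 / (c1 + u ^ 2)).
  { apply functional_extensionality; intro u; unfold xi3; destruct (Rlt_dec 1 1); [lra|].
    destruct (Req_EM_T 1 1); [reflexivity|lra]. }
  destruct (caseB c1 c2 t hc) as [A1 [A2 [A3 A4]]].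
  unfold tr1, tr2, tr3. rewrite E1, E2, E3.
  exact (general 1 _ _ _ t hr A1 A2 A3 A4).
- assert (hL : lam r ^ 2 = (1 - r^2)/r^2).
  { unfold lam; destruct (Rlt_dec 1 r); [lra|].
    replace ((sqrt (1 - r ^ 2) / r) ^ 2) with (sqrt (1 - r ^ 2) ^ 2 / r ^ 2) by (field; lra).
    rewrite pow2_sqrt; nra. }
  assert (E1 : xi1 r c1 c2 = fun u => (r - 1 / r) * cos (lam r * u) / (c1 / r + cos (lam r * u))).
  { apply functional_extensionality; intro u; unfold xi1; destruct (Rlt_dec 1 r); [lra|].
    destruct (Req_EM_T r 1); [lra|reflexivity]. }
  assert (E2 : xi2 r c1 c2 = fun u => - (lam r * sin (lam r * u) / (c1 / r + cos (lam r * u)))).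
  { apply functional_extensionality; intro u; unfold xi2; destruct (Rlt_dec 1 r); [lra|].
    destruct (Req_EM_T r 1); [lra|reflexivity]. }
  assert (E3 : xi3 r c1 c2 = fun u => lam r * c2 / (c1 / r + cos (lam r * u))).
  { apply functional_extensionality; intro u; unfold xi3; destruct (Rlt_dec 1 r); [lra|].
    destruct (Req_EM_T r 1); [lra|reflexivity]. }
  assert (hD : c1 / r + cos (lam r * t) <> 0).
  { pose proof (COS_bound (lam r * t)).
    replace (c1 / r + cos (lam r * t)) with ((c1 + cos (lam r * t) * r) / r) by (field; lra).
    destruct (Rle_dec 0 c1).
    - assert (c1 >= 1) by nra.
      apply Rgt_not_eq. apply Rdiv_lt_0_compat; nra.
    - assert (c1 <= -1) by nra.
      apply Rlt_not_eq. unfold Rdiv. apply Rmult_neg_pos; [nra | apply Rinv_0_lt_compat; lra]. }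
  assert (hCS : cos (lam r * t) ^ 2 + sin (lam r * t) ^ 2 = 1).
  { pose proof (sin2_cos2 (lam r * t)) as H; unfold Rsqr in H; nra. }
  destruct (caseC r c1 c2 (lam r) (fun u => cos (lam r * u)) (fun u => sin (lam r * u)) t
     hr hL (d_cos (lam r)) (d_sin (lam r)) hCS hD hc) as [A1 [A2 [A3 A4]]].
  unfold tr1, tr2, tr3. rewrite E1, E2, E3.
  exact (general r _ _ _ t hr A1 A2 A3 A4).
Qed.
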